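(* Let $X_1,\dots,X_n$ be i.i.d. with law $P_0$, and let $\{m_{\beta,\eta,\zeta}:\beta\in B,\eta\in\mathcal H_\eta,\zeta\in\Xi\}$ be measurable real functions, where $d$ is a metric on $\mathcal H_\eta$, $\beta_0\in\mathbb R^p$ and $\eta_0\in\mathcal H_\eta$. Suppose there are constants $C_1,C_2,C_3>0$ such that for all $\beta\in B,\eta\in\mathcal H_\eta,\zeta\in\Xi$, $$P_0(m_{\beta,\eta,\zeta}-m_{\beta,\eta_0,\zeta})\le-C_1d^2(\eta,\eta_0)+C_2\|\beta-\beta_0\|^2,$$ and for every $\delta>0$ and $n$, $$P_0^*\sup_{\beta\in B,\ \eta\in\mathcal H_\eta,\ \|\beta-\beta_0\|<\delta,\ d(\eta,\eta_0)<\delta,\ \zeta\in\Xi}\big|\mathbb G_n(m_{\beta,\eta,\zeta}-m_{\beta_0,\eta_0,\zeta})\big|\le C_3\phi_n(\delta),$$ for functions $\phi_n$ such that $\delta\mapsto\phi_n(\delta)/\delta^{a}$ is decreasing for some $a<2$. Let $\tilde\beta_n$ be a sequence of (random) elements and, for each $\zeta$, let $\hat\eta_{\tilde\beta_n}(\zeta)$ satisfy $\mathbb P_nm_{\tilde\beta_n,\hat\eta_{\tilde\beta_n}(\zeta),\zeta}\ge\mathbb P_nm_{\tilde\beta_n,\eta_0,\zeta}$ (e.g. a maximizer of $\eta\mapsto\mathbb P_nm_{\tilde\beta_n,\eta,\zeta}$), with $\Pr(\tilde\beta_n\in B,\ \hat\eta_{\tilde\beta_n}(\zeta)\in\mathcal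 H_\eta\ \forall\zeta\in\Xi)\to1$. Then for any sequence of positive numbers $r_n$ with $r_n^2\phi_n(1/r_n)\le\sqrt n$ for every $n$, $$\sup_{\zeta\in\Xi}r_n\,d(\hat\eta_{\tilde\beta_n}(\zeta),\eta_0)\le O^*_{P_0}\big(1+r_n\|\tilde\beta_n-\beta_0\|\big).$$
   Context: $\mathbb P_nf=n^{-1}\sum_if(X_i)$, $\mathbb G_nf=\sqrt n(\mathbb P_n-P_0)f$; $P_0^*$ denotes outer expectation and $O^*_{P_0}$ boundedness in outer probability. $\Xi$ is an arbitrary index set and $B\subset\mathbb R^p$. *)

(* Defs.v *)
From HB Require Import structures.
From mathcomp Require Import all_boot all_order all_algebra.
From mathcomp Require Import all_classical all_reals all_analysis measurable_realfun.
Set Implicit Arguments. Unset Strict Implicit. Unset Printing Implicit Defensive.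
Import Order.TTheory GRing.Theory Num.Theory.
Import numFieldNormedType.Exports.
Local Open Scope classical_set_scope.
Local Open Scope ring_scope.

Section Defs.
Context {R : realType}.

Definition enorm (p : nat) (v : 'rV[R]_p) : R :=
  Num.sqrt (\sum_(i < p) (v ord0 i) ^+ 2).

Context {dO dX : measure_display} {Omega : measurableType dO}
  {Xs : measurableType dX}.

Definition iid (P : probability Omega R) (P0 : probability Xs R)
  (X : nat -> Omega -> Xs) : Prop :=
  [/\ (forall i, measurable_fun setT (X i)),
      (forall i (A : set Xs), measurable A -> P (X i @^-1` A) = P0 A)
    & (forall (s : seq nat) (A : nat -> set Xs), uniq s ->
        (forall i, measurable (A i)) ->
        P (\big[setI/setT]_(i <- s) (X i @^-1` A i)) =
        (\prod_(i <- s) P (X i @^-1` A i))%E)].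

(* P0 f : expectation under the law (a real number, for integrable f) *)
Definition Pexp (P0 : probability Xs R) (f : Xs -> R) : R :=
  fine (\int[P0]_x (f x)%:E).

Definition Pn (X : nat -> Omega -> Xs) (n : nat) (w : Omega) (f : Xs -> R) : R :=
  n%:R^-1 * \sum_(i < n) f (X i w).

Definition Gn (P0 : probability Xs R) (X : nat -> Omega -> Xs) (n : nat)
  (w : Omega) (f : Xs -> R) : R :=
  Num.sqrt n%:R * (Pn X n w f - Pexp P0 f).

Definition outer_expect (P : probability Omega R) (Z : Omega -> \bar R) : \bar R :=
  ereal_inf [set e : \bar R | exists U : Omega -> \bar R,
    [/\ measurable_fun (setT : set Omega) U, (forall w, Z w <= U w)%E & (e = \int[P]_w U w)%E]].

Definition outer_prob (P : probability Omega R) (A : set Omega) : \bar R :=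
  ereal_inf [set e : \bar R | exists Bm : set Omega, [/\ measurable Bm, A `<=` Bm & e = P Bm]].

End Defs.

(* Main.v *)
Require Import Defs.
From HB Require Import structures.
From mathcomp Require Import all_boot all_order all_algebra.
From mathcomp Require Import all_classical all_reals all_analysis measurable_realfun.
From mathcomp.algebra_tactics Require Import ring lra.
Import Order.TTheory GRing.Theory Num.Theory.
Import numFieldNormedType.Exports.
Local Open Scope classical_set_scope.
Local Open Scope ring_scope.

Lemma shell (R : realType) (t : R) : 1 <= t -> exists j : nat, 2 ^+ j <= t /\ t < 2 ^+ j.+1.
Proof.
move=> t1.
have ex : exists k : nat, t < 2 ^+ k.
  have t0 : 0 <= t by lra.
  exists (Num.bound t); apply: lt_le_trans (archi_boundP t0) _.
  by rewrite -natrX ler_nat; apply: ltnW; apply: ltn_expl.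
case: (ex_minnP ex) => k tk kmin.
case: k tk kmin => [|j] tk kmin.
  by move: tk; rewrite expr0 ltNge t1.
exists j; split => //; rewrite leNgt; apply/negP => h.
by have := kmin _ h; rewrite ltnn.
Qed.

Lemma Pn_B (R : realType) (dO dX : measure_display)
  (Omega : measurableType dO) (Xs : measurableType dX) (X : nat -> Omega -> Xs) n w (g h : Xs -> R) :
  Pn X n w (fun x => g x - h x) = Pn X n w g - Pn X n w h.
Proof. by rewrite /Pn sumrB mulrBr. Qed.

Lemma Pexp_B (R : realType) (dX : measure_display) (Xs : measurableType dX)
  (P0 : probability Xs R) (g h : Xs -> R) :
  P0.-integrable setT (EFin \o g) -> P0.-integrable setT (EFin \o h) ->
  Pexp P0 (fun x => g x - h x) = Pexp P0 g - Pexp P0 h.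
Proof.
move=> ig ih; rewrite /Pexp integralB_EFin // fineB //; exact: integrable_fin_num.
Qed.

Lemma markov_cover (R : realType) (dO : measure_display) (Omega : measurableType dO)
  (P : probability Omega R) (Z : Omega -> \bar R) (c th e : R) :
  0 < th -> 0 < e -> (forall w, (0 <= Z w)%E) -> (outer_expect P Z <= c%:E)%E ->
  exists C, [/\ measurable C, [set w | (th%:E <= Z w)%E] `<=` C & (P C <= ((c + e) / th)%:E)%E].
Proof.
move=> th0 e0 Z0 hZ.
have : (outer_expect P Z < (c + e)%:E)%E.
  by apply: le_lt_trans hZ _; rewrite lte_fin; lra.
move=> /ereal_inf_lt [y [U [mU ZU ->]]] hU.
have U0 w : (0 <= U w)%E by apply: le_trans (Z0 w) (ZU w).
exists (setT `&` [set x | (th%:E <= `|U x|)%E]); split.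
- apply: emeasurable_fun_c_infty => //.
  exact: measurableT_comp.
- move=> w /= h; split => //; rewrite gee0_abs //; exact: le_trans h (ZU w).
- set C := (X in P X).
  have mC : measurable C.
    by apply: emeasurable_fun_c_infty => //; exact: measurableT_comp.
  have := le_integral_abse P measurableT mU th0.
  rewrite setTI.
  under eq_integral => x _ do rewrite gee0_abs //.
  move=> /le_lt_trans /(_ hU).
  rewrite /C setTI in mC *.
  move=> hh; rewrite mulrC EFinM lee_pdivlMl //; exact: ltW.
Qed.

Lemma det (R : realType) (dO dX : measure_display)
  (Omega : measurableType dO) (Xs : measurableType dX)
  (P0 : probability Xs R) (X : nat -> Omega -> Xs)
  (p : nat) (T Xi : Type)
  (B : set 'rV[R]_p) (H : set T) (dist : T -> T -> R)
  (beta0 : 'rV[R]_p) (eta0 : T)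
  (m : 'rV[R]_p -> T -> Xi -> Xs -> R) (C1 C2 : R)
  (n : nat) (w : Omega) (b : 'rV[R]_p) (e : T) (z : Xi) (delta : R) :
  (0 < n)%N -> B b -> H e -> H eta0 -> dist eta0 eta0 = 0 ->
  P0.-integrable setT (EFin \o m b e z) ->
  P0.-integrable setT (EFin \o m b eta0 z) ->
  P0.-integrable setT (EFin \o m beta0 eta0 z) ->
  Pexp P0 (fun x => m b e z x - m b eta0 z x)
       <= - C1 * dist e eta0 ^+ 2 + C2 * enorm (b - beta0) ^+ 2 ->
  Pn X n w (m b eta0 z) <= Pn X n w (m b e z) ->
  C2 * enorm (b - beta0) ^+ 2 <= C1 / 2 * dist e eta0 ^+ 2 ->
  enorm (b - beta0) < delta -> dist e eta0 < delta -> 0 < delta ->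
  ((Num.sqrt n%:R * (C1 * dist e eta0 ^+ 2) / 4)%:E <=
        ereal_sup ([set 0%E] `|` [set y | exists b e z,
          [/\ B b, H e, (enorm (b - beta0) < delta)%R, (dist e eta0 < delta)%R &
              y = (`| Gn P0 X n w (fun x => m b e z x - m beta0 eta0 z x) |)%:E]]))%E.
Proof.
move=> n0 Bb He He0 d00 i1 i2 i3 hP hPn hC bd ed d0.
set g1 := Gn P0 X n w (fun x => m b e z x - m beta0 eta0 z x).
set g2 := Gn P0 X n w (fun x => m b eta0 z x - m beta0 eta0 z x).
rewrite Pexp_B // in hP.
have key : g1 - g2 = Num.sqrt n%:R * (Pn X n w (m b e z) - Pn X n w (m b eta0 z)
   - (Pexp P0 (m b e z) - Pexp P0 (m b eta0 z))).
  rewrite /g1 /g2 /Gn !Pn_B !Pexp_B //; ring.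
have s0 : 0 < Num.sqrt (n%:R : R) by rewrite Num.Theory.sqrtr_gt0 ltr0n.
set D := C1 * dist e eta0 ^+ 2.
have h1 : Num.sqrt n%:R * (D / 2) <= g1 - g2.
  rewrite key; apply: ler_wpM2l; [exact: ltW|rewrite /D; lra].
have n1 := ler_norm g1; have n2 := ler_norm (- g2); rewrite normrN in n2.
have [hh|hh] : Num.sqrt n%:R * D / 4 <= `|g1| \/ Num.sqrt n%:R * D / 4 <= `|g2|.
  have [h|h] := leP (Num.sqrt n%:R * D / 4) `|g1|; [by left|right; lra].
- apply: (@le_trans _ _ (`|g1|%:E)%E); first by rewrite lee_fin.
  apply: ereal_sup_ubound; right; exists b, e, z; split => //.
- apply: (@le_trans _ _ (`|g2|%:E)%E); first by rewrite lee_fin.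
  apply: ereal_sup_ubound; right; exists b, eta0, z; split => //; by rewrite d00.
Qed.

Lemma p2a_lt4 (R : realType) (a : R) : a < 2 -> 2 `^ a < 4.
Proof.
move=> a2.
have -> : (4 : R) = 2 `^ 2 by rewrite powR_mulrn //; ring.
rewrite /powR (negbTE (_ : (2:R) != 0)) // ltr_expR ltr_pM2r //.
by apply: ln_gt0; lra.
Qed.

Lemma powR_shift (R : realType) (a x : R) (k : nat) : 0 <= x ->
  (2 ^+ k * x) `^ a = (2 `^ a) ^+ k * x `^ a.
Proof.
move=> x0; elim: k => [|k IH]; first by rewrite !expr0 !mul1r.
rewrite !exprS -mulrA powRM //; last by rewrite mulr_ge0 // exprn_ge0.
by rewrite IH mulrA.
Qed.

Lemma phi_bound (R : realType) (phi : R -> R) (a C1 C3 r s : R) (j : nat) :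
  0 < C1 -> 0 < C3 -> 0 < r -> 0 < s ->
  (forall x y, 0 < x -> x <= y -> phi y / y `^ a <= phi x / x `^ a) ->
  r ^+ 2 * phi r^-1 <= s ->
  C3 * phi (2 ^+ j.+1 * r^-1) / (s * (C1 * (2 ^+ j * r^-1) ^+ 2) / 4)
    <= (4 * C3 * 2 `^ a / C1) * (2 `^ a / 4) ^+ j.
Proof.
move=> C10 C30 r0 s0 dec hr.
set x := r^-1.
have x0 : 0 < x by rewrite invr_gt0.
set t := (2 : R) ^+ j.
have t0 : 0 < t by rewrite exprn_gt0.
have hy : x <= 2 ^+ j.+1 * x.
  by apply: ler_peMl; [exact: ltW|apply: exprn_ege1; lra].
have hphi : phi (2 ^+ j.+1 * x) <= phi x * (2 `^ a) ^+ j.+1.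
  have := dec _ _ x0 hy.
  rewrite powR_shift; last exact: ltW.
  have P0 : 0 < x `^ a by rewrite powR_gt0.
  rewrite ler_pdivrMr; last by rewrite mulr_gt0 // exprn_gt0 // powR_gt0.
  move=> h; apply: le_trans h _; rewrite le_eqVlt; apply/orP; left; apply/eqP; field; rewrite gt_eqF //.
have pa0 : 0 < 2 `^ a by rewrite powR_gt0.
set u := (2 `^ a) ^+ j.
have eu : (2 `^ a) ^+ j.+1 = 2 `^ a * u by rewrite exprS.
rewrite eu in hphi.
have hphix : phi x <= s * x ^+ 2.
  rewrite /x exprVn -[phi _](@mulKf _ (r ^+ 2)) ?gt_eqF ?exprn_gt0 // mulrC.
  by rewrite ler_wpM2r // invr_ge0 exprn_ge0 // ltW.
have th0 : 0 < s * (C1 * (t * x) ^+ 2) / 4.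
  by apply: divr_gt0 => //; apply: mulr_gt0 => //; apply: mulr_gt0 => //; apply: exprn_gt0; apply: mulr_gt0.
rewrite ler_pdivrMr //.
have e4 : (4 : R) ^+ j = t ^+ 2.
  by rewrite /t -exprM mulnC exprM; congr (_ ^+ _); ring.
rewrite expr_div_n e4.
have -> : 4 * C3 * 2 `^ a / C1 * (u / t ^+ 2) * (s * (C1 * (t * x) ^+ 2) / 4)
   = C3 * (s * x ^+ 2) * (2 `^ a * u).
  by field; rewrite !gt_eqF // exprn_gt0.
rewrite -mulrA; apply: ler_wpM2l; first exact: ltW.
apply: le_trans hphi _; apply: ler_wpM2r => //.
by apply: mulr_ge0; apply: ltW => //; rewrite exprn_gt0.
Qed.

Lemma geom_eseries (R : realType) (K q : R) : 0 <= K -> 0 < q -> q < 1 ->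
  (\sum_(0 <= k <oo) (K * q ^+ k)%:E <= (K / (1 - q))%:E)%E.
Proof.
move=> K0 q0 q1.
apply: lime_le.
  by apply: is_cvg_nneseries => k _; rewrite lee_fin mulr_ge0 // exprn_ge0 // ltW.
apply: nearW => n.
rewrite sumEFin lee_fin.
have := @geometric_le_lim R n K q K0 q0.
rewrite ger0_norm; last exact: ltW.
move=> /(_ q1); by rewrite /series /=.
Qed.

Theorem lemma4 (R : realType) (dO dX : measure_display)
  (Omega : measurableType dO) (Xs : measurableType dX)
  (P : probability Omega R) (P0 : probability Xs R)
  (X : nat -> Omega -> Xs)
  (p : nat) (T Xi : Type)
  (B : set 'rV[R]_p) (H : set T) (dist : T -> T -> R)
  (beta0 : 'rV[R]_p) (eta0 : T)
  (m : 'rV[R]_p -> T -> Xi -> Xs -> R)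
  (C1 C2 C3 a : R) (phi : nat -> R -> R)
  (betat : nat -> Omega -> 'rV[R]_p) (etah : nat -> Xi -> Omega -> T)
  (r : nat -> R) :
  iid P P0 X ->
  (* d is a metric on H_eta *)
  (forall x y, H x -> H y -> 0 <= dist x y) ->
  (forall x y, H x -> H y -> (dist x y = 0 <-> x = y)) ->
  (forall x y, H x -> H y -> dist x y = dist y x) ->
  (forall x y z, H x -> H y -> H z -> dist x z <= dist x y + dist y z) ->
  H eta0 ->
  (* the m_{beta,eta,zeta} are measurable with finite P0-expectation *)
  (forall b e z, B b -> H e -> P0.-integrable setT (EFin \o m b e z)) ->
  (forall z, P0.-integrable setT (EFin \o m beta0 eta0 z)) ->
  0 < C1 -> 0 < C2 -> 0 < C3 ->
  (forall b e z, B b -> H e ->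
     Pexp P0 (fun x => m b e z x - m b eta0 z x)
       <= - C1 * dist e eta0 ^+ 2 + C2 * enorm (b - beta0) ^+ 2) ->
  (forall (n : nat) (delta : R), (0 < n)%N -> 0 < delta ->
     (outer_expect P (fun w =>
        ereal_sup ([set 0%E] `|` [set y | exists b e z,
          [/\ B b, H e, (enorm (b - beta0) < delta)%R, (dist e eta0 < delta)%R &
              y = (`| Gn P0 X n w (fun x => m b e z x - m beta0 eta0 z x) |)%:E]]))
      <= (C3 * phi n delta)%:E)%E) ->
  a < 2 ->
  (forall n x y, 0 < x -> x <= y -> phi n y / powR y a <= phi n x / powR x a) ->
  (forall n z w, (0 < n)%N ->
     Pn X n w (m (betat n w) eta0 z) <= Pn X n w (m (betat n w) (etah n z w) z)) ->
  (* Pr(betat_n in B, etah_n(zeta) in H for all zeta) -> 1,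
     i.e. the outer probability of the complementary event tends to 0 *)
  (fun n => outer_prob P
     (~` [set w | B (betat n w) /\ forall z, H (etah n z w)])) @ \oo --> (0%:E : \bar R) ->
  (forall n, 0 < r n) ->
  (forall n, (0 < n)%N -> r n ^+ 2 * phi n (r n)^-1 <= Num.sqrt n%:R) ->
  (* sup_zeta r_n d(etah, eta0) <= O*_P(1 + r_n ||betat_n - beta0||) *)
  forall eps : R, 0 < eps -> exists M : R, exists N : nat, forall n, (N <= n)%N ->
    (outer_prob P [set w |
       ((M * (1 + r n * enorm (betat n w - beta0)))%:E <
        ereal_sup [set y | exists z, y = (r n * dist (etah n z w) eta0)%:E])%E]
     < eps%:E)%E.
Proof.
move=> iidX d0 deq dsym dtri H0 intg int0 C10 C20 C30 hP hS a2 dec hPn hbad r0 hr eps eps0.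
set p2 := 2 `^ a.
have p20 : 0 < p2 by rewrite powR_gt0.
have p24 : p2 < 4 by exact: p2a_lt4.
set q := p2 / 4.
have q0 : 0 < q by rewrite divr_gt0.
have q1 : q < 1 by rewrite ltr_pdivrMr //; lra.
set K := 4 * C3 * p2 / C1 + 1.
have K0 : 0 < K by rewrite /K; apply: ltr_wpDl; [apply: divr_ge0; rewrite ?mulr_ge0 //; lra | lra].
have [J hJ] : exists J : nat, K * q ^+ J / (1 - q) < eps / 2.
  have := @cvg_geometric R (K / (1 - q)) q.
  rewrite ger0_norm; last exact: ltW.
  move=> /(_ q1) /cvgr_lt /(_ (eps / 2)) h.
  have : 0 < eps / 2 by lra.
  move=> /h [N _ hN]; exists N; have := hN N (leqnn N).
  by rewrite /= mulrAC.
move: hbad => /fine_cvgP [hfin /cvgr_lt /(_ (eps / 2))].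
have e20 : 0 < eps / 2 by lra.
move=> /(_ e20) hlt.
have [N1 _ hN1] : \forall n \near \oo,
   (outer_prob P (~` [set w | B (betat n w) /\ forall z, H (etah n z w)]) < (eps / 2)%:E)%E.
  apply: filterS2 hfin hlt => n hf hl; rewrite -(fineK hf) lte_fin; exact: hl.
set M := 2 ^+ J.+1 + 2 * C2 / C1 + 1.
have M1 : 1 <= M.
  have : 0 <= 2 * C2 / C1 by apply: divr_ge0; lra.
  have : 0 <= (2:R) ^+ J.+1 by rewrite exprn_ge0.
  rewrite /M; lra.
exists M, (maxn N1 1) => n; rewrite geq_max => /andP [nN1 n1].
have [y [Bm [mBm subB ->]] hBm] := ereal_inf_lt (hN1 n nN1).
set s := Num.sqrt (n%:R : R).
have s0 : 0 < s by rewrite Num.Theory.sqrtr_gt0 ltr0n.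
pose Z (delta : R) := (fun w =>
        ereal_sup ([set 0%E] `|` [set y | exists b e z,
          [/\ B b, H e, (enorm (b - beta0) < delta)%R, (dist e eta0 < delta)%R &
              y = (`| Gn P0 X n w (fun x => m b e z x - m beta0 eta0 z x) |)%:E]])).
have hcov : forall j : nat, exists C, [/\ measurable C,
   [set w | ((s * (C1 * (2 ^+ j * (r n)^-1) ^+ 2) / 4)%:E <= Z (2 ^+ j.+1 * (r n)^-1)%R w)%E] `<=` C
   & (P C <= (K * q ^+ j)%:E)%E].
  move=> j.
  set th := s * (C1 * (2 ^+ j * (r n)^-1) ^+ 2) / 4.
  have th0 : 0 < th.
    apply: divr_gt0 => //; apply: mulr_gt0 => //; apply: mulr_gt0 => //.
    by apply: exprn_gt0; apply: mulr_gt0; rewrite ?exprn_gt0 ?invr_gt0.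
  have dl0 : 0 < 2 ^+ j.+1 * (r n)^-1 by apply: mulr_gt0; rewrite ?exprn_gt0 ?invr_gt0.
  have Z0 : forall w, (0 <= Z (2 ^+ j.+1 * (r n)^-1)%R w)%E.
    by move=> w; apply: ereal_sup_ubound; left.
  have [C [mC sC PC]] := @markov_cover R dO Omega P _ (C3 * phi n (2 ^+ j.+1 * (r n)^-1)) th (th * q ^+ j) th0
     (mulr_gt0 th0 (exprn_gt0 _ q0)) Z0 (hS n _ n1 dl0).
  exists C; split => //.
  apply: le_trans PC _; rewrite lee_fin.
  have hb := @phi_bound R (phi n) a C1 C3 (r n) s j C10 C30 (r0 n) s0 (dec n) (hr n n1).
  rewrite mulrDl [th * _ / th]mulrAC divff ?gt_eqF // mul1r.
  rewrite /K mulrDl mul1r lerD2r; exact: hb.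
have [Cf hCf] := boolp.choice hcov.
have mCf : forall k, measurable (Cf (J + k)%N) by move=> k; case: (hCf (J + k)%N).
have mU : measurable (\bigcup_k Cf (J + k)%N) by exact: bigcupT_measurable.
set Cov := Bm `|` \bigcup_k Cf (J + k)%N.
have mCov : measurable Cov by exact: measurableU.
have hsub : [set w | ((M * (1 + r n * enorm (betat n w - beta0)))%:E <
              ereal_sup [set y0 | exists z : Xi, y0 = (r n * dist (etah n z w) eta0)%:E])%E]
           `<=` Cov.
  move=> w /= hw.
  have [[Bb He] | nb] := pselect (B (betat n w) /\ forall z, H (etah n z w)); last first.
    by left; apply: subB.
  right.
  have [y0 [z ->] hz] := ereal_sup_gt hw.
  rewrite lte_fin in hz.
  set b := enorm (betat n w - beta0) in hz *.
  set d := dist (etah n z w) eta0 in hz *.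
  have b0 : 0 <= b by rewrite /b /enorm Num.Theory.sqrtr_ge0.
  have dd0 : 0 <= d by apply: d0.
  have rn := r0 n.
  rewrite mulrDr mulr1 in hz.
  have Mrb0 : 0 <= M * (r n * b) by apply: mulr_ge0; [lra|apply: mulr_ge0 => //; exact: ltW].
  have t1 : 1 <= r n * d by lra.
  have [j [hj1 hj2]] := @shell R _ t1.
  have Jj : (J < j)%N.
    have h2 : 0 <= 2 * C2 / C1 by apply: divr_ge0; lra.
    have hM : (2:R) ^+ J.+1 <= M by rewrite /M; lra.
    have : (2:R) ^+ J.+1 < 2 ^+ j.+1 by lra.
    by rewrite ltr_eXn2l ?ltnS //; lra.
  exists (j - J)%N => //; rewrite subnKC; last exact: ltnW.
  case: (hCf j) => _ sC _; apply: sC => /=.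
  have dl0 : 0 < 2 ^+ j.+1 * (r n)^-1 by apply: mulr_gt0; rewrite ?exprn_gt0 ?invr_gt0.
  have hMd : M * b <= d.
    have : r n * (M * b) < r n * d by rewrite mulrCA; lra.
    by rewrite ltr_pM2l // => /ltW.
  have hC : C2 * b ^+ 2 <= C1 / 2 * d ^+ 2.
    have hMM : M <= M ^+ 2 by rewrite expr2 ler_peMl //; lra.
    have hM' : 2 * C2 / C1 <= M.
      have : 0 <= (2:R) ^+ J.+1 by rewrite exprn_ge0.
      by rewrite /M; lra.
    have hM2 : 2 * C2 / C1 <= M ^+ 2 by lra.
    have hC2 : C2 <= C1 / 2 * M ^+ 2.
      have -> : C2 = C1 / 2 * (2 * C2 / C1) by field; rewrite gt_eqF.
      by apply: ler_wpM2l => //; apply: divr_ge0; lra.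
    apply: (@le_trans _ _ (C1 / 2 * M ^+ 2 * b ^+ 2)).
      by apply: ler_wpM2r => //; rewrite exprn_ge0.
    rewrite -mulrA -exprMn; apply: ler_wpM2l; first by apply: divr_ge0; lra.
    by rewrite !expr2; apply: ler_pM => //; apply: mulr_ge0 => //; lra.
  have ed : d < 2 ^+ j.+1 * (r n)^-1 by rewrite ltr_pdivlMr // mulrC.
  have bd : b < 2 ^+ j.+1 * (r n)^-1.
    apply: le_lt_trans ed; apply: le_trans hMd; rewrite ler_peMl //.
  have d00 : dist eta0 eta0 = 0 by apply: (deq _ _ H0 H0).2.
  apply: le_trans (@det R dO dX Omega Xs P0 X p T Xi B H dist beta0 eta0 m C1 C2 n w
     (betat n w) (etah n z w) z (2 ^+ j.+1 * (r n)^-1) n1 Bb (He z) H0 d00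
     (intg _ _ z Bb (He z)) (intg _ _ z Bb H0) (int0 z) (hP _ _ z Bb (He z))
     (hPn n z w n1) hC bd ed dl0).
  rewrite lee_fin; apply: ler_wpM2r => //; apply: ler_wpM2l; first exact: ltW.
  apply: ler_wpM2l; first exact: ltW.
  have hjd : 2 ^+ j * (r n)^-1 <= d by rewrite ler_pdivrMr // mulrC.
  have hj0 : 0 <= 2 ^+ j * (r n)^-1 by apply: mulr_ge0; rewrite ?exprn_ge0 ?invr_ge0 // ltW.
  by rewrite !expr2; apply: ler_pM.
apply: (@le_lt_trans _ _ (P Cov)).
  by apply: ereal_inf_lbound; exists Cov; split.
apply: (@le_lt_trans _ _ (P Bm + P (\bigcup_k Cf (J + k)%N))%E).
  exact: measureU2.
have hU : (P (\bigcup_k Cf (J + k)%N) <= ((K * q ^+ J) / (1 - q))%:E)%E.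
  apply: le_trans (measure_sigma_subadditive _ mCf mU (@subset_refl _ _)) _.
  have Kq0 : 0 <= K * q ^+ J by apply: mulr_ge0; [exact: ltW|apply: exprn_ge0; exact: ltW].
  apply: le_trans (@geom_eseries R (K * q ^+ J) q Kq0 q0 q1).
  apply: lee_nneseries; first by move=> k _ _; exact: measure_ge0.
  move=> k _; case: (hCf (J + k)%N) => _ _ h; apply: le_trans h _.
  by rewrite lee_fin exprD mulrA.
have -> : eps = eps / 2 + eps / 2 by field.
rewrite EFinD; apply: lte_leD => //.
  by rewrite ge0_fin_numE ?measure_ge0 //; exact: (le_lt_trans (probability_le1 P mU) (ltry _)).
apply: le_trans hU _; rewrite lee_fin; exact: ltW.
Qed.
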